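(* Given the linear quantum stochastic system $dx = (\mathbb{J}_{2n} R -\tfrac{1}{2}C^{\sharp}C) x\, dt -C^{\sharp}\Sigma\, d\mathcal{U}$, $d\mathcal{Y} = C x\, dt + \Sigma\, d\mathcal{U}$, there exists a real symplectic transformation $V$ such that the following hold: 1. The transformed states $\begin{pmatrix} \hat{q} \\ \hat{p} \end{pmatrix}=\hat{x} = Vx= V \begin{pmatrix} q \\ p \end{pmatrix}$ can be partitioned as $\hat{q}=\begin{pmatrix}\hat{q}_a \\ \hat{q}_b \\ \hat{q}_c\end{pmatrix}$, $\hat{p}=\begin{pmatrix}\hat{p}_a \\ \hat{p}_b \\ \hat{p}_c\end{pmatrix}$, with $\hat{q}_a,\hat{p}_a\in$ ($k\times 1$), $\hat{q}_b,\hat{p}_b$ ($l\times 1$), $\hat{q}_c,\hat{p}_c$ ($(n-k-l)\times 1$), where (a) the states $\hat{q}_a$ and $\hat{p}_a$ are both controllable and observable; (b) the states $\hat{p}_b$ are controllable but unobservable; (c) the states $\hat{q}_b$ are uncontrollable but observable; (d) the states $\hat{q}_c$ and $\hat{p}_c$ are both uncontrollable and unobservable. 2. In the transformed states the system takes the form $d\hat{x} = \hat{A}\hat{x}\,dt + \hat{B}\,d\mathcal{U}$, $d\mathcal{Y} = \hat{C}\hat{x}\,dt + D\, d\mathcal{U}$ (with $D=\Sigma$), where, with respect to the ordering $(\hat{q}_a,\hat{q}_b,\hat{q}_c,\hat{p}_a,\hat{p}_b,\hat{p}_c)$, $\hat{A}=\begin{pmatrix} A_{co,11} & A_{13,1}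 & 0 & A_{co,12} & 0 & 0 \\ 0 & A_{\bar{c}o} & 0 & 0 & 0 & 0 \\ 0 & A_{43,1} & A_{\bar{c}\bar{o},11} & 0 & 0 & A_{\bar{c}\bar{o},12} \\ A_{co,21} & A_{13,2} & 0 & A_{co,22} & 0 & 0 \\ A_{21,1} & A_{23} & A_{24,1} & A_{21,2} & A_{c\bar{o}} & A_{24,2} \\ 0 & A_{43,2} & A_{\bar{c}\bar{o},21} & 0 & 0 & A_{\bar{c}\bar{o},22} \end{pmatrix}$, $\hat{B} = \begin{pmatrix} B_{co,1} \\ 0 \\ 0 \\ B_{co,2} \\ B_{c\bar{o}} \\ 0 \end{pmatrix}$, $\hat{C} = \begin{pmatrix} C_{co,1} & C_{\bar{c}o} & 0 & C_{co,2} & 0 & 0 \end{pmatrix}$.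
   Context: Setting: $x=\begin{pmatrix} q\\ p\end{pmatrix}$ with $q=(q_1,\dots,q_n)^\top$, $p=(p_1,\dots,p_n)^\top$ self-adjoint position/momentum operators satisfying the canonical commutation relations $[x,x^\top]=\imath\mathbb{J}_{2n}$, where $\mathbb{J}_{2k}=\begin{pmatrix} 0_{k\times k} & I_k\\ -I_k & 0_{k\times k}\end{pmatrix}$. $R$ is a real symmetric $2n\times 2n$ Hamiltonian matrix, $C$ a real $2m\times 2n$ coupling matrix, $\Sigma$ a real symplectic $2m\times 2m$ matrix, and $\mathcal{U},\mathcal{Y}$ are the $2m$-vectors of input and output field quadratures. For a $2r\times 2s$ matrix $X$, $X^{\sharp}=-\mathbb{J}_{2s}X^{\dagger}\mathbb{J}_{2r}$; a $2k\times 2k$ matrix $T$ is symplectic if $TT^{\sharp}=T^{\sharp}T=I_{2k}$. Only real symplectic state transformations preserve the structure of the system (self-adjointness and CCRs). With $A=\mathbb{J}_{2n}R-\tfrac12 C^\sharp C$, $B=-C^\sharp\Sigma$, the controllability matrix is $(B\ AB\ \cdots\ A^{2n-1}B)$ and the observability matrix is $(C; CA; \dots; CA^{2n-1})$; the controllable subspace is the image of the controllability matrix, the unobservable subspace is the kernel of the observability matrix, and the uncontrollable and observable subspaces are defined as the orthogonal complements in $\mathbb{R}^{2n}$ of the controllable and unobservable subspaces, respectively. *)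

(* Defs.v *)
From HB Require Import structures.
From mathcomp Require Import all_boot all_order all_algebra.
From mathcomp Require Export reals.
Set Implicit Arguments. Unset Strict Implicit. Unset Printing Implicit Defensive.
Import GRing.Theory Num.Theory.
Local Open Scope ring_scope.

Definition Jmx (R : realType) (k : nat) : 'M[R]_(k + k) :=
  block_mx 0 1%:M (- 1%:M) 0.

(* X^sharp = - J_{2s} X^dagger J_{2r}  for real X of size 2r x 2s (dagger = transpose) *)
Definition sharp (R : realType) (r s : nat) (X : 'M[R]_(r + r, s + s))
  : 'M[R]_(s + s, r + r) := - (Jmx R s *m X^T *m Jmx R r).

Definition symplectic (R : realType) (k : nat) (T : 'M[R]_(k + k)) : Prop :=
  T *m sharp T = 1%:M /\ sharp T *m T = 1%:M.

Definition Amat (R : realType) (n m : nat) (H : 'M[R]_(n + n))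
  (C : 'M[R]_(m + m, n + n)) : 'M[R]_(n + n) :=
  Jmx R n *m H - 2^-1 *: (sharp C *m C).

Definition Bmat (R : realType) (n m : nat) (C : 'M[R]_(m + m, n + n))
  (Sig : 'M[R]_(m + m)) : 'M[R]_(n + n, m + m) := - (sharp C *m Sig).

Definition controllable_sub (R : realType) (N p : nat) (A : 'M[R]_N)
  (B : 'M[R]_(N, p)) (v : 'cV[R]_N) : Prop :=
  exists u : 'I_N -> 'cV[R]_p, v = \sum_(i < N) (A ^+ i *m B *m u i).

Definition unobservable_sub (R : realType) (N q : nat) (A : 'M[R]_N)
  (C : 'M[R]_(q, N)) (v : 'cV[R]_N) : Prop :=
  forall i : 'I_N, C *m A ^+ i *m v = 0.

Definition orth (R : realType) (N : nat) (S : 'cV[R]_N -> Prop) (w : 'cV[R]_N)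
  : Prop := forall v, S v -> w^T *m v = 0.

Definition uncontrollable_sub (R : realType) (N p : nat) (A : 'M[R]_N)
  (B : 'M[R]_(N, p)) := orth (controllable_sub A B).

Definition observable_sub (R : realType) (N q : nat) (A : 'M[R]_N)
  (C : 'M[R]_(q, N)) := orth (unobservable_sub A C).

(* the six groups of transformed coordinates, xhat = (qa; qb; qc; pa; pb; pc) *)
Inductive blk := Qa | Qb | Qc | Pa | Pb | Pc.

Definition blk_of (n k l : nat) (i : 'I_(n + n)) : blk :=
  if (i < n)%N then
    (if (i < k)%N then Qa else if (i < k + l)%N then Qb else Qc)
  else
    (if (i - n < k)%N then Pa else if (i - n < k + l)%N then Pb else Pc).

Arguments blk_of : clear implicits.

Definition evec (R : realType) (N : nat) (i : 'I_N) : 'cV[R]_N := delta_mx i ord0.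

Definition states_classified (R : realType) (n m k l : nat)
  (Ah : 'M[R]_(n + n)) (Bh : 'M[R]_(n + n, m + m)) (Ch : 'M[R]_(m + m, n + n))
  : Prop :=
  forall i : 'I_(n + n),
    match blk_of n k l i with
    | Qa | Pa => controllable_sub Ah Bh (evec R i) /\ observable_sub Ah Ch (evec R i)
    | Pb => controllable_sub Ah Bh (evec R i) /\ unobservable_sub Ah Ch (evec R i)
    | Qb => uncontrollable_sub Ah Bh (evec R i) /\ observable_sub Ah Ch (evec R i)
    | Qc | Pc => uncontrollable_sub Ah Bh (evec R i) /\ unobservable_sub Ah Ch (evec R i)
    end.

(* block pattern of Ahat (rows/columns ordered qa qb qc pa pb pc):
   false = the block is required to be zero *)
Definition A_allowed (bi bj : blk) : bool :=
  match bi, bj with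
  | Qa, (Qa | Qb | Pa) => true
  | Qb, Qb => true
  | Qc, (Qb | Qc | Pc) => true
  | Pa, (Qa | Qb | Pa) => true
  | Pb, _ => true
  | Pc, (Qb | Qc | Pc) => true
  | _, _ => false
  end.

Definition B_allowed (bi : blk) : bool :=
  match bi with Qa | Pa | Pb => true | _ => false end.

Definition C_allowed (bj : blk) : bool :=
  match bj with Qa | Qb | Pa => true | _ => false end.

Definition kalman_block_form (R : realType) (n m k l : nat)
  (Ah : 'M[R]_(n + n)) (Bh : 'M[R]_(n + n, m + m)) (Ch : 'M[R]_(m + m, n + n))
  : Prop :=
  (forall i j : 'I_(n + n), ~~ A_allowed (blk_of n k l i) (blk_of n k l j) -> Ah i j = 0)
  /\ (forall (i : 'I_(n + n)) (j : 'I_(m + m)), ~~ B_allowed (blk_of n k l i) -> Bh i j = 0)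
  /\ (forall (i : 'I_(m + m)) (j : 'I_(n + n)), ~~ C_allowed (blk_of n k l j) -> Ch i j = 0).

(* Main.v *)
Require Import Defs.
From HB Require Import structures.
From mathcomp Require Import all_boot all_order all_algebra.
From mathcomp Require Import reals.
From mathcomp Require Import zify ring.
From Stdlib Require Import Classical.
Import GRing.Theory Num.Theory.
Local Open Scope ring_scope.

Lemma Jmx_tr (R : realType) k : (Jmx R k)^T = - Jmx R k.
Proof.
by rewrite /Jmx tr_block_mx !trmx0 linearN /= trmx1 opp_block_mx !oppr0 opprK.
Qed.

Lemma JmxJmx (R : realType) k : Jmx R k *m Jmx R k = - 1%:M.
Proof.
rewrite /Jmx mulmx_block !mulmx0 !mul0mx !add0r !addr0 mulmx1 mul1mx.
have -> : block_mx (- 1%:M) 0 0 (- 1%:M) = - block_mx (1%:M : 'M[R]_k) (0 : 'M[R]_k) (0 : 'M[R]_k) 1%:M.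
  by rewrite opp_block_mx oppr0.
by rewrite scalar_mx_block.
Qed.

Lemma Jmx_unit (R : realType) k : Jmx R k \in unitmx.
Proof.
have h : Jmx R k *m (- Jmx R k) = 1%:M by rewrite mulmxN JmxJmx opprK.
by case: (mulmx1_unit h).
Qed.

Lemma Jmx_mulcol (R : realType) k (a b : 'cV[R]_k) :
  Jmx R k *m col_mx a b = col_mx b (- a).
Proof.
by rewrite /Jmx mul_block_col !mul0mx mul1mx add0r addr0 mulNmx mul1mx.
Qed.

Lemma Jmx_vl (R : realType) k (v : 'cV[R]_(k + k)) i :
  (Jmx R k *m v) (lshift k i) 0 = v (rshift k i) 0.
Proof.
by rewrite -[v]vsubmxK Jmx_mulcol col_mxEu col_mxEd.
Qed.

Lemma Jmx_vr (R : realType) k (v : 'cV[R]_(k + k)) i :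
  (Jmx R k *m v) (rshift k i) 0 = - v (lshift k i) 0.
Proof.
by rewrite -[v]vsubmxK Jmx_mulcol col_mxEd mxE col_mxEu.
Qed.

Definition om (R : realType) n (x y : 'cV[R]_(n + n)) : R :=
  (x^T *m Jmx R n *m y) 0 0.
Arguments om {R n}.

Lemma entry_mul (R : realType) m p q (X : 'M[R]_(m, p)) (Y : 'M[R]_(p, q)) a b :
  (X *m Y) a b = (row a X *m col b Y) 0 0.
Proof. by rewrite !mxE; apply: eq_bigr => k _; rewrite !mxE. Qed.

Lemma entry_om (R : realType) n p q (X : 'M[R]_(n + n, p)) (Y : 'M[R]_(n + n, q)) a b :
  (X^T *m Jmx R n *m Y) a b = om (col a X) (col b Y).
Proof.
by rewrite /om -!mulmxA entry_mul -tr_col [col b (_ *m _)]colE [col b Y]colE !mulmxA.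
Qed.

Section Om.
Variables (R : realType) (n : nat).
Implicit Types x y z : 'cV[R]_(n + n).

Lemma omDl x y z : om (x + y) z = om x z + om y z.
Proof. by rewrite /om linearD /= !mulmxDl mxE. Qed.
Lemma omDr x y z : om z (x + y) = om z x + om z y.
Proof. by rewrite /om !mulmxDr mxE. Qed.
Lemma omZl a x y : om (a *: x) y = a * om x y.
Proof. by rewrite /om linearZ /= -!scalemxAl mxE. Qed.
Lemma omZr a x y : om x (a *: y) = a * om x y.
Proof. by rewrite /om -!scalemxAr mxE. Qed.
Lemma omNl x y : om (- x) y = - om x y.
Proof. by rewrite -scaleN1r omZl mulN1r. Qed.
Lemma omNr x y : om x (- y) = - om x y.
Proof. by rewrite -scaleN1r omZr mulN1r. Qed.
Lemma omBl x y z : om (x - y) z = om x z - om y z.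
Proof. by rewrite omDl omNl. Qed.
Lemma omBr x y z : om z (x - y) = om z x - om z y.
Proof. by rewrite omDr omNr. Qed.
Lemma om0l y : om 0 y = 0.
Proof. by rewrite /om linear0 !mul0mx mxE. Qed.
Lemma om0r y : om y 0 = 0.
Proof. by rewrite /om mulmx0 mxE. Qed.
Lemma om_suml I (r : seq I) (P : pred I) (F : I -> 'cV[R]_(n + n)) y :
  om (\sum_(i <- r | P i) F i) y = \sum_(i <- r | P i) om (F i) y.
Proof.
elim/big_rec2: _ => [|i a b _ <-]; first exact: om0l.
by rewrite omDl.
Qed.
Lemma om_sumr I (r : seq I) (P : pred I) (F : I -> 'cV[R]_(n + n)) y :
  om y (\sum_(i <- r | P i) F i) = \sum_(i <- r | P i) om y (F i).
Proof.
elim/big_rec2: _ => [|i a b _ <-]; first exact: om0r.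
by rewrite omDr.
Qed.
Lemma tr11 (M : 'M[R]_1) : M 0 0 = M^T 0 0.
Proof. by rewrite mxE. Qed.
Lemma om_skew x y : om y x = - om x y.
Proof.
rewrite /om [in RHS]tr11.
by rewrite !trmx_mul trmxK Jmx_tr mulNmx mulmxN mulmxA [in RHS]mxE opprK.
Qed.
Lemma om_alt x : om x x = 0.
Proof.
have h := om_skew x x.
have : 2%:R * om x x = 0 by rewrite mulr2n mulrDl mul1r {1}h addNr.
by move/eqP; rewrite mulf_eq0 pnatr_eq0 /= => /eqP.
Qed.
Lemma om_Jself y : om (Jmx R n *m y) y = (y^T *m y) 0 0.
Proof.
by rewrite /om trmx_mul Jmx_tr mulmxN mulNmx -mulmxA JmxJmx mulmxN mulmx1 opprK.
Qed.
End Om.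
Arguments omDl {R n}.
Arguments omDr {R n}.
Arguments omZl {R n}.
Arguments omZr {R n}.
Arguments omNl {R n}.
Arguments omNr {R n}.
Arguments omBl {R n}.
Arguments omBr {R n}.
Arguments om0l {R n}.
Arguments om0r {R n}.
Arguments om_suml {R n}.
Arguments om_sumr {R n}.
Arguments tr11 {R}.
Arguments om_skew {R n}.
Arguments om_alt {R n}.
Arguments om_Jself {R n}.


Section Fam.
Variables (R : realType) (n : nat).
Local Notation vec := ('cV[R]_(n + n)).
Local Notation J := (Jmx R n).

Definition sympfam (t : nat) (Q P : nat -> vec) : Prop :=
  forall i j, (i < t)%N -> (j < t)%N ->
    [/\ om (Q i) (Q j) = 0, om (P i) (P j) = 0 & om (Q i) (P j) = (i == j)%:R].

Definition perp (t : nat) (Q P : nat -> vec) (x : vec) : Prop :=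
  forall i, (i < t)%N -> om (Q i) x = 0 /\ om (P i) x = 0.

Definition proj (t : nat) (Q P : nat -> vec) (z : vec) : vec :=
  \sum_(i < t) (- om (P i) z *: Q i + om (Q i) z *: P i).

Definition ext (f : nat -> vec) (t : nat) (x : vec) : nat -> vec :=
  fun i => if i == t then x else f i.

Definition FQ (t : nat) (Q : nat -> vec) : 'M[R]_(n + n, t) :=
  \matrix_(i < n + n, j < t) Q j i 0.

Lemma colFQ t Q (j : 'I_t) : col j (FQ t Q) = Q j.
Proof. by apply/matrixP => i k; rewrite !mxE (ord1 k). Qed.

Lemma sum_delta t j (f : nat -> R) : (j < t)%N ->
  \sum_(i < t) f i * (j == i)%:R = f j.
Proof.
move=> hj; rewrite (bigD1 (Ordinal hj)) //= eqxx mulr1 big1 ?addr0 //.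
by move=> i; rewrite -val_eqE /= eq_sym => /negbTE ->; rewrite mulr0.
Qed.

Lemma sum_delta' t j (f : nat -> R) : (j < t)%N ->
  \sum_(i < t) f i * (i == j :> nat)%:R = f j.
Proof.
move=> hj; rewrite -(sum_delta t j f hj); apply: eq_bigr => i _; by rewrite eq_sym.
Qed.

Lemma gram t Q P : sympfam t Q P ->
  (row_mx (FQ t Q) (FQ t P))^T *m J *m row_mx (FQ t Q) (FQ t P) = Jmx R t.
Proof.
move=> hs; apply/matrixP => a b; rewrite entry_om.
rewrite -(splitK a) -(splitK b).
case: (split a) => a'; case: (split b) => b' /=;
  rewrite ?colKl ?colKr !colFQ /Jmx ?block_mxEul ?block_mxEur ?block_mxEdl ?block_mxEdr !mxE;
  have [h1 h2 h3] := hs _ _ (ltn_ord a') (ltn_ord b').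
- by rewrite h1.
- by rewrite h3.
- have [_ _ h4] := hs _ _ (ltn_ord b') (ltn_ord a').
  by rewrite om_skew h4 eq_sym.
- by rewrite h2.
Qed.

Lemma fam_bound t Q P : sympfam t Q P -> (t <= n)%N.
Proof.
move=> hs; have G := gram _ _ _ hs.
have h1 : \rank (Jmx R t) = (t + t)%N by rewrite mxrank_unit // Jmx_unit.
have h2 := mxrankM_maxr ((row_mx (FQ t Q) (FQ t P))^T *m J) (row_mx (FQ t Q) (FQ t P)).
rewrite G h1 in h2.
have h3 := rank_leq_row (row_mx (FQ t Q) (FQ t P)).
have := leq_trans h2 h3; lia.
Qed.

Lemma perp_nonzero t Q P : (t < n)%N -> exists y, perp t Q P y /\ y != 0.
Proof.
move=> ht.
set F := row_mx (FQ t Q) (FQ t P).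
set K := F^T *m J.
set Ker := kermx K^T.
have hr : \rank Ker = (n + n - \rank K^T)%N by rewrite mxrank_ker.
have hK := rank_leq_col K^T.
have hnz : Ker != 0.
  rewrite -mxrank_eq0 hr; apply/eqP; lia.
have [r hr0] : exists r, row r Ker != 0.
  apply/existsP; apply: contraR hnz; rewrite negb_exists => /forallP h.
  apply/eqP/row_matrixP => r; rewrite row0; exact/eqP/negbNE/h.
exists (row r Ker)^T; split; last by rewrite trmx_eq0.
have hk : row r Ker *m K^T = 0 by apply/sub_kermxP; rewrite row_sub.
have hk' : K *m (row r Ker)^T = 0 by rewrite -[K]trmxK -trmx_mul hk trmx0.
move=> i hi; split.
- have := entry_om _ _ _ _ F (row r Ker)^T (lshift t (Ordinal hi)) 0.
  by rewrite -/K hk' colKl colFQ col_id mxE => <-.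
- have := entry_om _ _ _ _ F (row r Ker)^T (rshift t (Ordinal hi)) 0.
  by rewrite -/K hk' colKr colFQ col_id mxE => <-.
Qed.

Lemma proj_perp t Q P z : sympfam t Q P -> perp t Q P (z - proj t Q P z).
Proof.
move=> hs j hj; rewrite /proj !omBr !om_sumr; split.
- under eq_bigr => i _ do rewrite omDr !omZr.
  rewrite (eq_bigr (fun i : 'I_t => om (Q i) z * (j == i)%:R)); last first.
    move=> i _; have [h1 _ h3] := hs _ _ hj (ltn_ord i).
    by rewrite h1 h3 mulr0 add0r.
  by rewrite (sum_delta t j (fun k => om (Q k) z) hj) subrr.
- under eq_bigr => i _ do rewrite omDr !omZr.
  rewrite (eq_bigr (fun i : 'I_t => om (P i) z * (i == j :> nat)%:R)); last first.
    move=> i _; have [_ h2 _] := hs _ _ hj (ltn_ord i).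
    have [_ _ h3] := hs _ _ (ltn_ord i) hj.
    by rewrite h2 (om_skew (Q i) (P j)) h3 mulr0 addr0 mulrN mulNr opprK.
  by rewrite (sum_delta' t j (fun k => om (P k) z) hj) subrr.
Qed.

Lemma om_proj_l t Q P z y : perp t Q P y -> om (proj t Q P z) y = 0.
Proof.
move=> hp; rewrite /proj om_suml big1 // => i _.
have [h1 h2] := hp _ (ltn_ord i).
by rewrite omDl !omZl h1 h2 !mulr0 addr0.
Qed.

Lemma om_proj_r t Q P z y : perp t Q P y -> om y (proj t Q P z) = 0.
Proof. by move=> hp; rewrite om_skew om_proj_l ?oppr0. Qed.

Lemma perpZ t Q P a x : perp t Q P x -> perp t Q P (a *: x).
Proof. by move=> hp i hi; have [h1 h2] := hp i hi; rewrite !omZr h1 h2 !mulr0. Qed.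

Lemma perp_le t t' Q P x : (t' <= t)%N -> perp t Q P x -> perp t' Q P x.
Proof. by move=> hle hp i hi; apply: hp; apply: leq_trans hle. Qed.

Lemma fam_ext t Q P x y : sympfam t Q P -> perp t Q P x -> perp t Q P y ->
  om x y = 1 -> sympfam t.+1 (ext Q t x) (ext P t y).
Proof.
move=> hs hx hy hxy i j hi hj; rewrite /ext.
case: (eqVneq i t) => [hit|hit]; case: (eqVneq j t) => [hjt|hjt]; try subst i; try subst j.
- by rewrite !om_alt eqxx hxy.
- have hj' : (j < t)%N by rewrite ltn_neqAle hjt -ltnS.
  have [h1 h2] := hx j hj'; have [h3 h4] := hy j hj'.
  by rewrite om_skew h1 om_skew h4 om_skew h2 !oppr0 eq_sym (negbTE hjt).
- have hi' : (i < t)%N by rewrite ltn_neqAle hit -ltnS.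
  have [h1 h2] := hx i hi'; have [h3 h4] := hy i hi'.
  by rewrite h1 h4 h3 (negbTE hit).
- have hi' : (i < t)%N by rewrite ltn_neqAle hit -ltnS.
  have hj' : (j < t)%N by rewrite ltn_neqAle hjt -ltnS.
  exact: hs.
Qed.

Lemma sqnorm_pos (y : vec) : y != 0 -> (y^T *m y) 0 0 != 0.
Proof.
move=> hy; apply: contra hy => /eqP h; apply/eqP/matrixP => i k.
rewrite (ord1 k) [RHS]mxE.
have h' : \sum_(j < n + n) y j 0 * y j 0 = 0.
  rewrite -[RHS]h mxE; apply: eq_bigr => j _; by rewrite mxE.
have hge : forall j : 'I_(n + n), xpredT j -> 0 <= y j 0 * y j 0.
  by move=> j _; rewrite -expr2 sqr_ge0.
have := psumr_eq0P hge h' (i := i) isT.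
by move=> /eqP; rewrite mulf_eq0 orbb => /eqP.
Qed.

Lemma partner t Q P y : sympfam t Q P -> perp t Q P y -> y != 0 ->
  exists x, perp t Q P x /\ om x y = 1.
Proof.
move=> hs hy hy0.
set z := J *m y; set z' := z - proj t Q P z.
have hz' : perp t Q P z' := proj_perp _ _ _ z hs.
have ho : om z' y = (y^T *m y) 0 0 by rewrite /z' omBl om_proj_l // subr0 om_Jself.
exists ((om z' y)^-1 *: z'); split; first exact: perpZ.
by rewrite omZl mulVf // ho sqnorm_pos.
Qed.

End Fam.
Arguments sympfam {R n}.
Arguments perp {R n}.
Arguments proj {R n}.
Arguments ext {R n}.
Arguments FQ {R n}.
Arguments colFQ {R n}.
Arguments gram {R n t Q P}.
Arguments fam_bound {R n t Q P}.
Arguments perp_nonzero {R n t} Q P.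
Arguments proj_perp {R n t Q P} z.
Arguments om_proj_l {R n t Q P z y}.
Arguments om_proj_r {R n t Q P z y}.
Arguments perpZ {R n t Q P} a {x}.
Arguments perp_le {R n t t' Q P x}.
Arguments fam_ext {R n t Q P x y}.
Arguments sqnorm_pos {R n y}.
Arguments partner {R n t Q P y}.


Section Construct.
Variables (R : realType) (n : nat).
Local Notation vec := ('cV[R]_(n + n)).

Lemma phase (Good : vec -> vec -> Prop) : forall d t (Q P : nat -> vec),
  (n - t <= d)%N -> sympfam t Q P ->
  exists t' Q' P', [/\ (t <= t')%N, sympfam t' Q' P',
    (forall i, (i < t)%N -> Q' i = Q i /\ P' i = P i),
    (forall i, (t <= i)%N -> (i < t')%N -> Good (Q' i) (P' i)) &
    ~ (exists x y, [/\ perp t' Q' P' x, perp t' Q' P' y, om x y = 1 & Good x y])].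
Proof.
elim=> [|d IH] t Q P hd hs;
  case: (classic (exists x y, [/\ perp t Q P x, perp t Q P y, om x y = 1 & Good x y]))
    => [[x [y [hx hy hxy hg]]]|hno].
- have := fam_bound (fam_ext hs hx hy hxy); lia.
- exists t, Q, P; split => //; move=> i h1 h2; exfalso; lia.
- have hs' := fam_ext hs hx hy hxy.
  have hd' : (n - t.+1 <= d)%N by lia.
  have [t' [Q' [P' [h1 h2 h3 h4 h5]]]] := IH _ _ _ hd' hs'.
  exists t', Q', P'; split; [lia | exact: h2 | | | exact: h5].
  + move=> i hi; have [e1 e2] := h3 i (ltnW hi).
    rewrite e1 e2 /ext; have -> : (i == t) = false by apply/eqP; lia.
    by [].
  + move=> i hi1 hi2; case: (eqVneq i t) => [->|hit].
    * have [e1 e2] := h3 t (ltnSn t); rewrite e1 e2 /ext eqxx; exact: hg.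
    * apply: h4 => //; lia.
- exists t, Q, P; split => //; move=> i h1 h2; exfalso; lia.
Qed.

Variable W : vec -> Prop.
Hypothesis W0 : W 0.
Hypothesis WD : forall x y, W x -> W y -> W (x + y).
Hypothesis WZ : forall a x, W x -> W (a *: x).

Definition Wo (x : vec) : Prop := forall w, W w -> om w x = 0.

Lemma W_sum (t : nat) (F : 'I_t -> vec) : (forall i, W (F i)) -> W (\sum_(i < t) F i).
Proof. by move=> h; apply: big_ind => //; move=> i _; apply: h. Qed.

Lemma W_opp x : W x -> W (- x).
Proof. by move=> h; rewrite -scaleN1r; apply: WZ. Qed.

Lemma perp_agree {t} {Q P Q' P' : nat -> vec} {x} :
  (forall i, (i < t)%N -> Q' i = Q i /\ P' i = P i) ->
  perp t Q' P' x -> perp t Q P x.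
Proof. by move=> ha hp i hi; have [e1 e2] := ha i hi; rewrite -e1 -e2; apply: hp. Qed.

Lemma key_lemma t1 t2 (Q P : nat -> vec) : sympfam t2 Q P -> (t1 <= t2)%N ->
  (forall i, (i < t1)%N -> W (Q i) /\ W (P i)) ->
  (forall i, (t1 <= i)%N -> (i < t2)%N -> W (P i) /\ Wo (P i)) ->
  (forall x y, perp t1 Q P x -> perp t1 Q P y -> W x -> W y -> om x y = 0) ->
  (forall y, perp t2 Q P y -> W y -> Wo y -> y = 0) ->
  forall z, perp t2 Q P z -> Wo z.
Proof.
move=> hs h12 ha hb iso rad z hz.
have Wproj : forall w, W w -> W (proj t2 Q P w).
  move=> w hw; apply: W_sum => i.
  case: (ltnP i t1) => hi.
    by have [q p] := ha i hi; apply: WD; apply: WZ.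
  have [p wo] := hb i hi (ltn_ord i).
  rewrite om_skew (wo w hw) !oppr0 scale0r add0r; exact: WZ.
have Wr : forall w, W w -> W (w - proj t2 Q P w).
  by move=> w hw; apply: WD => //; apply: W_opp; apply: Wproj.
move=> w hw.
set r := w - proj t2 Q P w.
have pr : perp t2 Q P r := proj_perp w hs.
have wor : Wo r.
  move=> w' hw'.
  rewrite -(subrK (proj t2 Q P w') w') omDl om_proj_l // addr0.
  apply: iso; [exact: perp_le h12 (proj_perp w' hs) | exact: perp_le h12 pr | exact: Wr | exact: Wr].
have r0 : r = 0 by apply: rad => //; exact: Wr.
have : w = r + proj t2 Q P w by rewrite /r subrK.
by move=> ->; rewrite omDl r0 om0l om_proj_l // add0r.
Qed.

Lemma construct : exists t1 t2 (Q P : nat -> vec),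
  [/\ (t1 <= t2)%N && (t2 <= n)%N, sympfam n Q P,
   (forall i, (i < t1)%N -> W (Q i) /\ W (P i)),
   (forall i, (t1 <= i)%N -> (i < t2)%N -> W (P i) /\ Wo (P i)) &
   (forall i, (t2 <= i)%N -> (i < n)%N -> Wo (Q i) /\ Wo (P i))].
Proof.
have hs0 : @sympfam R n 0 (fun _ => 0) (fun _ => 0) by [].

have [t1 [Q1 [P1 [_ hs1 _ g1 ng1]]]] :=
  phase (fun x y => W x /\ W y) n 0 _ _ (leq_subr _ _) hs0.
have [t2 [Q2 [P2 [l12 hs2 a12 g2 ng2]]]] :=
  phase (fun x y => W y /\ Wo y) n t1 _ _ (leq_subr _ _) hs1.
have [t3 [Q3 [P3 [l23 hs3 a23 g3 ng3]]]] :=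
  phase (fun x y => True) n t2 _ _ (leq_subr _ _) hs2.
have t3n : t3 = n.
  have := fam_bound hs3; rewrite leq_eqVlt => /orP[/eqP //|hlt].
  have [y [hy hy0]] := perp_nonzero Q3 P3 hlt.
  have [x [hx hxy]] := partner hs3 hy hy0.
  by exfalso; apply: ng3; exists x, y.
subst t3.
have a13 : forall i, (i < t1)%N -> Q3 i = Q1 i /\ P3 i = P1 i.
  move=> i hi; have [e1 e2] := a23 i (leq_trans hi l12).
  have [e3 e4] := a12 i hi; by rewrite e1 e2 e3 e4.
have hs3' : sympfam t2 Q3 P3.
  by move=> i j hi hj; apply: hs3; apply: (leq_trans _ l23).
have ha : forall i, (i < t1)%N -> W (Q3 i) /\ W (P3 i).
  by move=> i hi; have [e1 e2] := a13 i hi; rewrite e1 e2; apply: g1.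
have hb : forall i, (t1 <= i)%N -> (i < t2)%N -> W (P3 i) /\ Wo (P3 i).
  by move=> i h1 h2; have [e1 e2] := a23 i h2; rewrite e2; have [] := g2 i h1 h2.
have iso : forall x y, perp t1 Q3 P3 x -> perp t1 Q3 P3 y -> W x -> W y -> om x y = 0.
  move=> x y hx hy wx wy; apply/eqP; apply/negP => /negP hne.
  apply: ng1; exists x, ((om x y)^-1 *: y); split.
  - exact: perp_agree a13 hx.
  - exact: perpZ _ (perp_agree a13 hy).
  - by rewrite omZr mulVf.
  - by split => //; apply: WZ.
have rad : forall y, perp t2 Q3 P3 y -> W y -> Wo y -> y = 0.
  move=> y hy wy woy; apply/eqP; apply/negP => /negP hne.
  have hy2 := perp_agree a23 hy.
  have [x [hx hxy]] := partner hs2 hy2 hne.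
  by apply: ng2; exists x, y.
have K := key_lemma _ _ _ _ hs3' l12 ha hb iso rad.
exists t1, t2, Q3, P3; split => //; first by rewrite l12 l23.
move=> i h1 h2; split; apply: K => j hj; have [f1 f2 f3] := hs3 j i (leq_trans hj l23) h2.
- have [_ _ f4] := hs3 i j h2 (leq_trans hj l23).
  rewrite f1 om_skew f4; split => //.
  have -> : (i == j) = false by apply/eqP; lia.
  by rewrite oppr0.

- by rewrite f2 f3; split => //; have -> : (j == i) = false by apply/eqP; lia.
Qed.

End Construct.
Arguments Wo {R n}.


Lemma CH (R : realType) N (M : 'M[R]_N) :
  exists c : nat -> R, M ^+ N = \sum_(i < N) c i *: M ^+ i.
Proof.
case: N M => [|N'] M.
  by exists (fun _ => 0); apply/matrixP => [[]].
have CHM := Cayley_Hamilton M.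
set p := char_poly M in CHM.
have hs : size p = N'.+2 by rewrite size_char_poly.
have hl : p`_N'.+1 = 1.
  by have := monicP (char_poly_monic M); rewrite lead_coefE hs.
rewrite -(coefK p) poly_def linear_sum /= hs big_ord_recr /= in CHM.
rewrite linearZ /= rmorphXn /= horner_mx_X hl scale1r in CHM.
exists (fun i => - p`_i).
move/eqP: CHM; rewrite addrC addr_eq0 => /eqP ->.
rewrite -sumrN; apply: eq_bigr => i _.
by rewrite linearZ /= rmorphXn /= horner_mx_X scaleNr.
Qed.

Section Sys.
Variables (R : realType) (n m : nat) (H : 'M[R]_(n + n))
  (C : 'M[R]_(m + m, n + n)) (Sig : 'M[R]_(m + m)).
Hypothesis HH : H^T = H.
Hypothesis HS : symplectic Sig.
Local Notation vec := ('cV[R]_(n + n)).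
Local Notation N := (n + n)%N.
Local Notation A := (Amat H C).
Local Notation B := (Bmat C Sig).
Local Notation J := (Jmx R n).
Local Notation Jm := (Jmx R m).

Definition Rc (w : vec) := controllable_sub A B w.
Definition Ruo (x : vec) := unobservable_sub A C x.

Lemma Rc0 : Rc 0.
Proof. by exists (fun _ => 0); rewrite big1 // => i _; rewrite mulmx0. Qed.

Lemma RcD x y : Rc x -> Rc y -> Rc (x + y).
Proof.
move=> [u ->] [v ->]; exists (fun i => u i + v i).
by rewrite -big_split; apply: eq_bigr => i _; rewrite mulmxDr.
Qed.

Lemma RcZ a x : Rc x -> Rc (a *: x).
Proof.
move=> [u ->]; exists (fun i => a *: u i).
by rewrite scaler_sumr; apply: eq_bigr => i _; rewrite scalemxAr.
Qed.

Lemma Rc_sum (t : nat) (F : 'I_t -> vec) : (forall i, Rc (F i)) -> Rc (\sum_(i < t) F i).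
Proof. by move=> h; apply: big_ind => //; [exact: Rc0 | exact: RcD]. Qed.

Lemma Rc_gen i (u : 'cV[R]_(m + m)) : (i < N)%N -> Rc (A ^+ i *m B *m u).
Proof.
move=> hi; exists (fun j => if (j == i :> nat) then u else 0).
rewrite (bigD1 (Ordinal hi)) //= eqxx big1 ?addr0 //.
by move=> j; rewrite -val_eqE /= => /negbTE ->; rewrite mulmx0.
Qed.

Lemma Rc_all i (u : 'cV[R]_(m + m)) : Rc (A ^+ i *m B *m u).
Proof.
elim/ltn_ind: i u => i IH u.
case: (ltnP i N) => hi; first exact: Rc_gen.
have [c hc] := CH _ _ A.
have -> : A ^+ i = A ^+ (i - N) * A ^+ N by rewrite -exprD subnK.
rewrite hc mulr_sumr -!mulmxE !mulmx_suml.
apply: Rc_sum => j.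
rewrite -scalemxAr -!scalemxAl; apply: RcZ.
rewrite !mulmxE -exprD; apply: IH.
have := ltn_ord j; lia.
Qed.

Lemma Rc_A w : Rc w -> Rc (A *m w).
Proof.
move=> [u ->]; rewrite mulmx_sumr; apply: Rc_sum => i.
have e : A *m A ^+ i = A ^+ i.+1 by rewrite exprS mulmxE.
by rewrite !mulmxA e; apply: Rc_all.
Qed.

Lemma Ruo_all x : Ruo x -> forall i, C *m A ^+ i *m x = 0.
Proof.
move=> hx; elim/ltn_ind => i IH.
case: (ltnP i N) => hi; first exact: (hx (Ordinal hi)).
have [c hc] := CH _ _ A.
have -> : A ^+ i = A ^+ (i - N) * A ^+ N by rewrite -exprD subnK.
rewrite hc mulr_sumr -!mulmxE mulmx_sumr mulmx_suml big1 // => j _.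
rewrite -scalemxAr -scalemxAr -scalemxAl mulmxE -exprD IH ?scaler0 //.
have := ltn_ord j; lia.
Qed.

Lemma Ruo_A x : Ruo x -> Ruo (A *m x).
Proof.
move=> hx i; have e : A ^+ i *m A = A ^+ i.+1 by rewrite exprSr mulmxE.
by rewrite mulmxA -(mulmxA C) e; apply: Ruo_all.
Qed.

Lemma JA : J *m A = - H - 2^-1 *: (C^T *m Jm *m C).
Proof.
rewrite /Amat /sharp mulmxBr mulmxA JmxJmx mulNmx mul1mx -scalemxAr.
congr (_ - (_ *: _)).
by rewrite mulNmx mulmxN !mulmxA JmxJmx mulNmx mul1mx !mulNmx opprK.
Qed.

Lemma half_lemma (x h : 'M[R]_(n + n)) :
  - (- h - 2^-1 *: - x) = - (- h - 2^-1 *: x) - x.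
Proof.
have hx : 2^-1 *: x + 2^-1 *: x = x.
  by rewrite -scalerDl (_ : 2^-1 + 2^-1 = 1 :> R) ?scale1r //; field.
rewrite -{3}hx scalerN !opprB !opprK.
by rewrite opprD addrACA subrr add0r addrC.
Qed.

Lemma AtJ : A^T *m J = - (J *m A) - C^T *m Jm *m C.
Proof.
have h : (J *m A)^T = - (A^T *m J) by rewrite trmx_mul Jmx_tr mulmxN.
have e : A^T *m J = - (J *m A)^T by rewrite h opprK.
rewrite e JA linearB /= linearN /= HH linearZ /= !trmx_mul trmxK Jmx_tr.
by rewrite mulNmx mulmxN mulmxA half_lemma.
Qed.


Lemma BtJ : B^T *m J = - (Sig^T *m Jm *m C).
Proof.
rewrite /Bmat /sharp mulNmx opprK !trmx_mul trmxK !Jmx_tr.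
rewrite !mulmxN !mulNmx !mulmxA mulmxN mulNmx opprK -!mulmxA JmxJmx mulmxN mulmx1 !mulmxA.
by rewrite mulmxN.
Qed.

Lemma SJ_unit : Sig^T *m Jm \in unitmx.
Proof.
case: HS => h _; have [u _] := mulmx1_unit h.
by rewrite unitmx_mul unitmx_tr u Jmx_unit.
Qed.

Lemma AtJ_pow i (x : vec) : (forall j, (j < i)%N -> C *m A ^+ j *m x = 0) ->
  (A ^+ i)^T *m (J *m x) = (-1) ^+ i *: (J *m (A ^+ i *m x)).
Proof.
elim: i => [|i IH] h.
  by rewrite !expr0 trmx1 !mul1mx scale1r.
have e1 : A ^+ i.+1 = A ^+ i *m A by rewrite exprSr mulmxE.
have e2 : A ^+ i.+1 = A *m A ^+ i by rewrite exprS mulmxE.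
rewrite {1}e1 trmx_mul -mulmxA IH; last by move=> j hj; apply: h; lia.
rewrite -scalemxAr (mulmxA A^T) AtJ mulmxDl !mulNmx -!mulmxA (mulmxA C) (h i (ltnSn i)) !mulmx0 oppr0 addr0.
by rewrite (mulmxA A) -e2 scalerN [(-1) ^+ i.+1]exprS mulN1r scaleNr.
Qed.


Lemma om_gen i (u : 'cV[R]_(m + m)) (x : vec) :
  (forall j, (j < i)%N -> C *m A ^+ j *m x = 0) ->
  om (A ^+ i *m B *m u) x = - ((-1) ^+ i * (u^T *m (Sig^T *m Jm *m (C *m A ^+ i *m x))) 0 0).
Proof.
move=> h; rewrite /om !trmx_mul -!mulmxA AtJ_pow //.
rewrite -!scalemxAr (mulmxA B^T) BtJ mulNmx mulmxN scalerN.
have hh : forall (M : 'M[R]_1) a, (- (a *: M)) 0 0 = - (a * M 0 0) by move=> M a; rewrite !mxE.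
by rewrite hh -!mulmxA.
Qed.

Lemma Wo_Ruo (x : vec) : Wo Rc x <-> Ruo x.
Proof.
split => hx.
- have key : forall i, (i < N)%N -> C *m A ^+ i *m x = 0.
    elim/ltn_ind => i IH hi.
    have hall : forall u : 'cV[R]_(m + m),
        (u^T *m (Sig^T *m Jm *m (C *m A ^+ i *m x))) 0 0 = 0.
      move=> u; have := hx _ (Rc_gen i u hi).
      rewrite om_gen; last by move=> j hj; apply: IH => //; lia.
      move/eqP; rewrite oppr_eq0 mulf_eq0 signr_eq0 /= => /eqP.
      done.
    have G0 : Sig^T *m Jm *m (C *m A ^+ i *m x) = 0.
      apply/matrixP => a b; rewrite (ord1 b) [RHS]mxE.
      have e : forall M : 'M[R]_(m + m, 1), (row a M) 0 0 = M a 0 by move=> M; rewrite mxE.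
      by have := hall (delta_mx a 0); rewrite trmx_delta -rowE e.
    by rewrite -[C *m _ *m x](mulKmx SJ_unit) G0 mulmx0.
  by move=> i; apply: key.
- move=> w [u ->]; rewrite om_suml big1 // => i _.
  rewrite om_gen; last by move=> j _; apply: Ruo_all.
  by rewrite (Ruo_all _ hx) !mulmx0 mxE mulr0 oppr0.
Qed.

Lemma evec_mul (j : 'I_N) (v : vec) : v j 0 = 0 -> (evec R j)^T *m v = 0.
Proof.
move=> h; rewrite /evec trmx_delta -rowE; apply/matrixP => a b.
by rewrite (ord1 a) (ord1 b) !mxE h.
Qed.

Lemma evec_colE p (X : 'M[R]_(p, N)) j : X *m evec R j = col j X.
Proof. by rewrite colE /evec; congr (_ *m delta_mx _ _); apply: val_inj. Qed.

Lemma blk_l k l (a : 'I_n) :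
  blk_of n k l (lshift n a) = if (a < k)%N then Qa else if (a < k + l)%N then Qb else Qc.
Proof. by rewrite /blk_of /= ltn_ord. Qed.

Lemma blk_r k l (a : 'I_n) :
  blk_of n k l (rshift n a) = if (a < k)%N then Pa else if (a < k + l)%N then Pb else Pc.
Proof. rewrite /blk_of /= addKn (_ : (n + a < n)%N = false) //; lia. Qed.

Lemma main_sys : exists (V : 'M[R]_(n + n)) (k l : nat),
    symplectic V /\ (k + l <= n)%N /\
    let Ah := V *m Amat H C *m invmx V in
    let Bh := V *m Bmat C Sig in
    let Ch := C *m invmx V in
    states_classified k l Ah Bh Ch /\ kalman_block_form k l Ah Bh Ch.
Proof.
have [t1 [t2 [Q [P [hle hs ha hb hc]]]]] := @construct R n Rc Rc0 RcD RcZ.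
move/andP: hle => [l12 l2n].
pose M : 'M[R]_(n + n) := row_mx (FQ n Q) (FQ n P).
have G : M^T *m J *m M = J := gram hs.
have Mu : M \in unitmx.
  have : M^T *m J *m M \in unitmx by rewrite G Jmx_unit.
  by rewrite unitmx_mul => /andP [_ ->].
pose V := invmx M.
have VM : V *m M = 1%:M := mulVmx Mu.
have MV : M *m V = 1%:M := mulmxV Mu.
have Veq : V = - (J *m M^T *m J).
  have h : (- (J *m M^T *m J)) *m M = 1%:M.
    by rewrite mulNmx -!mulmxA (mulmxA M^T) G JmxJmx opprK.
  by rewrite -[V]mul1mx -h -(mulmxA _ M V) MV mulmx1.
exists V, t1, (t2 - t1)%N.
split.
  have e : V^T *m J *m V = (M *m V)^T *m J *m (M *m V).
    by rewrite trmx_mul {1}(_ : J = M^T *m J *m M) // !mulmxA.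
  rewrite MV trmx1 mul1mx mulmx1 in e.
  have h2 : sharp V *m V = 1%:M.
    by rewrite /sharp mulNmx -(mulmxA J V^T) -(mulmxA J _ V) e JmxJmx opprK.
  by split => //; apply: mulmx1C.
split; first lia.
rewrite (_ : invmx V = M); last by rewrite /V invmxK.
move=> Ah Bh Ch.
have hpow : forall i, Ah ^+ i = V *m A ^+ i *m M.
  elim=> [|i IH]; first by rewrite !expr0 mulmx1 VM.
  rewrite exprS -mulmxE IH /Ah exprS -mulmxE !mulmxA.
  by rewrite -(mulmxA (V *m A) M V) MV mulmx1.
have hAB : forall i, Ah ^+ i *m Bh = V *m (A ^+ i *m B).
  by move=> i; rewrite hpow /Bh -!mulmxA (mulmxA M V) MV mul1mx.
have hctrl : forall v, controllable_sub Ah Bh v <-> Rc (M *m v).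
  move=> v; split => [[u ->]|[u hu]].
  - exists u; rewrite mulmx_sumr; apply: eq_bigr => i _.
    by rewrite hAB !mulmxA MV mul1mx.
  - exists u; rewrite -[v]mul1mx -VM -mulmxA hu mulmx_sumr; apply: eq_bigr => i _.
    by rewrite hAB !mulmxA.
have eobs : forall (i : nat) (v : vec), Ch *m Ah ^+ i *m v = C *m A ^+ i *m (M *m v).
  by move=> i v; rewrite hpow /Ch !mulmxA -(mulmxA C M V) MV mulmx1.
have hobs : forall v, unobservable_sub Ah Ch v <-> Ruo (M *m v).
  by move=> v; split => h i; [rewrite -eobs | rewrite eobs]; exact: h.
have colMl : forall a : 'I_n, col (lshift n a) M = Q a.
  by move=> a; rewrite colKl colFQ.
have colMr : forall a : 'I_n, col (rshift n a) M = P a.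
  by move=> a; rewrite colKr colFQ.
have oppE : forall (X : 'cV[R]_N) i, (- X) i 0 = - X i 0 by move=> X i; rewrite mxE.
have Vl : forall (a : 'I_n) x, (V *m x) (lshift n a) 0 = - om (P a) x.
  move=> a x; rewrite Veq mulNmx -!mulmxA oppE Jmx_vl mulmxA entry_om.
  by rewrite colMr col_id.
have Vr : forall (a : 'I_n) x, (V *m x) (rshift n a) 0 = om (Q a) x.
  move=> a x; rewrite Veq mulNmx -!mulmxA oppE Jmx_vr mulmxA entry_om.
  by rewrite colMl col_id opprK.
pose cS (j : 'I_N) := Rc (col j M).
pose nS (j : 'I_N) := forall x, Rc x -> (V *m x) j 0 = 0.
pose cT (j : 'I_N) := Ruo (col j M).
pose nT (j : 'I_N) := forall x, Ruo x -> (V *m x) j 0 = 0.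
have classify : forall j, match blk_of n t1 (t2 - t1) j with
    | Qa | Pa => cS j /\ nT j
    | Pb => cS j /\ cT j
    | Qb => nS j /\ nT j
    | Qc | Pc => nS j /\ cT j end.
  move=> j; rewrite -(splitK j); case: (split j) => a /=;
    [rewrite blk_l | rewrite blk_r]; rewrite (subnKC l12);
    case: ifP => h1; [| case: ifP => h2 | | case: ifP => h2].
  - split; first by rewrite /cS colMl; exact: (ha a h1).1.
    move=> x hx; rewrite Vl ((Wo_Ruo x).2 hx (P a) (ha a h1).2) oppr0 //.
  - have h1' : (t1 <= a)%N by rewrite leqNgt h1.
    have [hp hw] := hb a h1' h2.
    split => x hx; rewrite Vl.
    + by rewrite om_skew (hw x hx) !oppr0.
    + by rewrite ((Wo_Ruo x).2 hx (P a) hp) oppr0.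
  - have h2' : (t2 <= a)%N by rewrite leqNgt h2.
    have [hq hp] := hc a h2' (ltn_ord a).
    split.
    + by move=> x hx; rewrite Vl om_skew (hp x hx) !oppr0.
    + by rewrite /cT colMl; apply/Wo_Ruo.
  - split; first by rewrite /cS colMr; exact: (ha a h1).2.
    by move=> x hx; rewrite Vr ((Wo_Ruo x).2 hx (Q a) (ha a h1).1).
  - have h1' : (t1 <= a)%N by rewrite leqNgt h1.
    have [hp hw] := hb a h1' h2.
    by split; rewrite ?/cS ?/cT colMr //; apply/Wo_Ruo.
  - have h2' : (t2 <= a)%N by rewrite leqNgt h2.
    have [hq hp] := hc a h2' (ltn_ord a).
    split.
    + by move=> x hx; rewrite Vr om_skew (hq x hx) oppr0.
    + by rewrite /cT colMr; apply/Wo_Ruo.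
have c_cS : forall j, cS j -> controllable_sub Ah Bh (evec R j).
  by move=> j h; apply/hctrl; rewrite evec_colE.
have c_nS : forall j, nS j -> uncontrollable_sub Ah Bh (evec R j).
  move=> j h v hv; apply: evec_mul.
  have := h _ ((hctrl v).1 hv); by rewrite mulmxA VM mul1mx.
have c_cT : forall j, cT j -> unobservable_sub Ah Ch (evec R j).
  by move=> j h; apply/hobs; rewrite evec_colE.
have c_nT : forall j, nT j -> observable_sub Ah Ch (evec R j).
  move=> j h v hv; apply: evec_mul.
  have := h _ ((hobs v).1 hv); by rewrite mulmxA VM mul1mx.
have entry_col : forall p q (X : 'M[R]_(p, q)) i j, X i j = (col j X) i 0.
  by move=> p q X i j; rewrite mxE.
have hAS : forall i j, cS j -> nS i -> Ah i j = 0.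
  move=> i j hj hi; rewrite entry_col /Ah colE -!mulmxA -colE.
  exact: hi _ (Rc_A _ hj).
have hAT : forall i j, cT j -> nT i -> Ah i j = 0.
  move=> i j hj hi; rewrite entry_col /Ah colE -!mulmxA -colE.
  exact: hi _ (Ruo_A _ hj).
have hB : forall i j, nS i -> Bh i j = 0.
  move=> i j hi; rewrite entry_col /Bh colE -mulmxA; apply: hi.
  by have := Rc_all 0 (delta_mx j 0); rewrite expr0 mul1mx.
have hC : forall i j, cT j -> Ch i j = 0.
  move=> i j hj; rewrite entry_col /Ch colE -mulmxA -colE.
  by have := Ruo_all _ hj 0; rewrite expr0 mulmx1 => ->; rewrite mxE.
split.
  move=> j; have := classify j.
  by case: (blk_of n t1 (t2 - t1) j) => [] [h1 h2]; split; auto.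
split; [|split].
- move=> i j; have ci := classify i; have cj := classify j.
  case: (blk_of n t1 (t2 - t1) i) ci => [] [ci1 ci2];
  case: (blk_of n t1 (t2 - t1) j) cj => [] [cj1 cj2] //= _;
  solve [by apply: hAS | by apply: hAT].
- move=> i j; have ci := classify i.
  case: (blk_of n t1 (t2 - t1) i) ci => [] [ci1 ci2] //= _; by apply: hB.
- move=> i j; have cj := classify j.
  case: (blk_of n t1 (t2 - t1) j) cj => [] [cj1 cj2] //= _; by apply: hC.
Qed.
End Sys.


Theorem theorem1 (R : realType) (n m : nat) (H : 'M[R]_(n + n))
  (C : 'M[R]_(m + m, n + n)) (Sig : 'M[R]_(m + m)) :
  H^T = H -> symplectic Sig ->
  exists (V : 'M[R]_(n + n)) (k l : nat),
    symplectic V /\ (k + l <= n)%N /\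
    let Ah := V *m Amat H C *m invmx V in
    let Bh := V *m Bmat C Sig in
    let Ch := C *m invmx V in
    states_classified k l Ah Bh Ch /\ kalman_block_form k l Ah Bh Ch.
Proof.
move=> HH HS; exact: (@main_sys R n m H C Sig HH HS).
Qed.
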